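(* Let $d\ge2$, let $\mathbf A,\mathbf B\in\overline{\mathbb Q}[t]$ be nonzero coprime polynomials, $\mathbf c=\mathbf A/\mathbf B$, and let $\lambda\in\overline{\mathbb Q}^*$. Then for all but finitely many $v\in\Omega_{\mathbb Q}$ we have $\log\max\{|\mathbf A_{\mathbf c,n}(\lambda)|_v,|\mathbf B_{\mathbf c,n}(\lambda)|_v\}=0$ for all $n\in\mathbb N$.
   Context: $\Omega_{\mathbb Q}$ is the set of places of $\mathbb Q$ (archimedean and $p$-adic, normalized so the product formula holds), and for each $v$ a fixed extension of $|\cdot|_v$ to $\overline{\mathbb Q}$ is used. The polynomials $\mathbf A_{\mathbf c,n},\mathbf B_{\mathbf c,n}\in\overline{\mathbb Q}[t]$ are defined by: $\mathbf A_{\mathbf c,0}=\mathbf A$, $\mathbf B_{\mathbf c,0}=\mathbf B$; if $\mathbf A(0)\neq 0$ then $\mathbf A_{\mathbf c,1}=\mathbf A^d+t\mathbf B^d$, $\mathbf B_{\mathbf c,1}=\mathbf A\mathbf B^{d-1}$, while if $\mathbf A(0)=0$ then $\mathbf A_{\mathbf c,1}=(\mathbf A^d+t\mathbf B^d)/t$, $\mathbf B_{\mathbf c,1}=\mathbf A\mathbf B^{d-1}/t$; and for $n\ge1$, $\mathbf A_{\mathbf c,n+1}=\mathbf A_{\mathbf c,n}^d+t\,\mathbf B_{\mathbf c,n}^d$, $\mathbf B_{\mathbf c,n+1}=\mathbf A_{\mathbf c,n}\mathbf B_{\mathbf c,n}^{d-1}$. (These give $\mathbf f_\lambda^n(\mathbf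 c(\lambda))=[\mathbf A_{\mathbf c,n}(\lambda):\mathbf B_{\mathbf c,n}(\lambda)]$ for $\mathbf f_\lambda(z)=(z^d+\lambda)/z$.) *)

(* Defs.v *)
From HB Require Import structures.
From mathcomp Require Import all_boot all_order all_algebra all_field.
Set Implicit Arguments. Unset Strict Implicit. Unset Printing Implicit Defensive.
Import Order.TTheory GRing.Theory Num.Theory.
Local Open Scope ring_scope.

Definition ABstep (d : nat) (AB : {poly algC} * {poly algC}) :
    {poly algC} * {poly algC} :=
  (AB.1 ^+ d + 'X * AB.2 ^+ d, AB.1 * AB.2 ^+ (d - 1)).

Definition ABfirst (d : nat) (A B : {poly algC}) : {poly algC} * {poly algC} :=
  if A.[0] != 0 then ABstep d (A, B)
  else ((A ^+ d + 'X * B ^+ d) %/ 'X, (A * B ^+ (d - 1)) %/ 'X).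

(* ABn d A B n = (A_{c,n}, B_{c,n}). *)
Definition ABn (d : nat) (A B : {poly algC}) (n : nat) :
    {poly algC} * {poly algC} :=
  match n with
  | 0 => (A, B)
  | m.+1 => iter m (ABstep d) (ABfirst d A B)
  end.

(* f : algC -> R is an absolute value on Qbar extending the p-adic absolute
   value |.|_p of Q, normalized by |p|_p = 1/p. *)
Definition padic_absval (R : realFieldType) (p : nat) (f : algC -> R) : Prop :=
  [/\ forall x, 0 <= f x,
      forall x, f x = 0 <-> x = 0,
      forall x y, f (x * y) = f x * f y,
      forall x y, f (x + y) <= Num.max (f x) (f y)
    & f p%:R = (p%:R)^-1].

(* Main.v *)
Require Import Defs.
From HB Require Import structures.
From mathcomp Require Import all_boot all_order all_algebra all_field.
From mathcomp Require Import ring lra.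
Import Order.TTheory GRing.Theory Num.Theory.
Local Open Scope ring_scope.
Set Implicit Arguments. Unset Strict Implicit.

Section Abs.
Variable R : realFieldType.

Lemma max1E (x y : R) : x <= 1 -> y <= 1 -> (x = 1 \/ y = 1) -> Num.max x y = 1.
Proof. by move=> hx hy; case: (leP x y) => h [] e; lra. Qed.

Lemma max1P (x y : R) : Num.max x y = 1 -> [/\ x <= 1, y <= 1 & (x = 1 \/ y = 1)].
Proof. by case: (leP x y) => h e; split; try lra; first [by left; lra | by right; lra]. Qed.

Variable p : nat.
Variable f : algC -> R.
Hypothesis hf : padic_absval p f.

Lemma f_ge0 x : 0 <= f x. Proof. by case: hf. Qed.
Lemma fM x y : f (x * y) = f x * f y. Proof. by case: hf. Qed.
Lemma fD x y : f (x + y) <= Num.max (f x) (f y). Proof. by case: hf. Qed.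
Lemma f0 : f 0 = 0. Proof. by case: hf => _ h _ _ _; apply/h. Qed.
Lemma f_neq0 x : x != 0 -> f x != 0.
Proof. by case: hf => _ h _ _ _ nx; apply/eqP => /h /eqP; rewrite (negbTE nx). Qed.

Lemma f1 : f 1 = 1.
Proof.
have h := fM 1 1; rewrite mulr1 in h.
have nz := f_neq0 (oner_neq0 algC).
by apply: (mulfI nz); rewrite mulr1 -h.
Qed.

Lemma fN1 : f (-1) = 1.
Proof.
have h := fM (-1) (-1); rewrite mulrNN mulr1 f1 in h.
have g := f_ge0 (-1).
have: (f (-1) - 1) * (f (-1) + 1) = 0 by rewrite mulrDr !mulrBl -h; ring.
by move/eqP; rewrite mulf_eq0 => /orP[] /eqP; lra.
Qed.

Lemma fN x : f (- x) = f x.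
Proof. by rewrite -mulN1r fM fN1 mul1r. Qed.

Lemma fX x n : f (x ^+ n) = f x ^+ n.
Proof. by elim: n => [|n IH]; rewrite ?expr0 ?f1 // !exprS fM IH. Qed.

Lemma fV x : x != 0 -> f x^-1 = (f x)^-1.
Proof.
move=> nx; have h := fM x x^-1; rewrite mulfV // f1 in h.
have nf := f_neq0 nx.
by rewrite -[RHS]mulr1 h mulKf.
Qed.

Lemma f_strict x y : f x < f y -> f (x + y) = f y.
Proof.
move=> lt; have h1 := fD x y; have h2 := fD (x + y) (- x).
rewrite addrC addKr fN in h2.
move: h1 h2; case: (leP (f x) (f y)) => h; case: (leP (f (x + y)) (f x)) => h0; lra.
Qed.

Lemma f_sum (I : Type) (r : seq I) (P : pred I) (F : I -> algC) (B : R) :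
  0 <= B -> (forall i, P i -> f (F i) <= B) -> f (\sum_(i <- r | P i) F i) <= B.
Proof.
move=> B0 h; apply: (big_ind (fun z => f z <= B)) => //; first by rewrite f0.
move=> a b ha hb; apply: le_trans (fD a b) _.
by rewrite ge_max ha hb.
Qed.

Lemma f_nat n : f n%:R <= 1.
Proof.
elim: n => [|n IH]; first by rewrite f0 ler01.
rewrite -addn1 natrD; apply: le_trans (fD _ _) _; rewrite f1.
by rewrite ge_max IH lexx.
Qed.

Lemma f_int z : f z%:~R <= 1.
Proof. case: z => n; first exact: f_nat. rewrite NegzE intrN fN; exact: f_nat. Qed.

Hypothesis pr : prime p.

Lemma f_coprime n : ~~ (p %| n)%N -> f n%:R = 1.
Proof.
move=> nd.
have cop : coprime p n by rewrite prime_coprime.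
have [u [v e]] := Bezoutz (n%:Z) (p%:Z).
have g : gcdz n%:Z p%:Z = 1.
  by rewrite /gcdz /= gcdnC (eqP cop).
rewrite g in e.
have e' : (u%:~R * n%:R + v%:~R * p%:R : algC) = 1.
  have := congr1 (fun z : int => (z%:~R : algC)) e.
  by rewrite /= rmorphD !rmorphM /= !pmulrn.
have h := fD (u%:~R * n%:R) (v%:~R * p%:R).
rewrite e' f1 !fM in h.
case: hf => _ _ _ _ fp.
have p1 : (1 < p%:R :> R) by rewrite ltr1n prime_gt1.
have hp : (p%:R : R)^-1 < 1 by rewrite invf_lt1 //; lra.
have hp0 : 0 <= (p%:R : R)^-1 by rewrite invr_ge0; lra.
have fu := f_int u; have fv := f_int v; have fn := f_nat n.
have fu0 := f_ge0 u%:~R; have fv0 := f_ge0 v%:~R; have fn0 := f_ge0 n%:R.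
rewrite fp in h.
have h2 : f v%:~R * (p%:R)^-1 < 1.
  apply: le_lt_trans hp; rewrite -[X in _ <= X]mul1r; apply: ler_wpM2r => //.
move: h; case: (leP (f u%:~R * f n%:R) (f v%:~R * (p%:R)^-1)) => hh h; first by lra.
have : 1 <= f u%:~R * f n%:R by lra.
move=> h3; apply/le_anti; rewrite fn /=.
apply: le_trans h3 _; rewrite -[X in _ <= X]mul1r; apply: ler_wpM2r => //.
Qed.

Lemma f_rat q : (`|denq q|%N < p)%N -> f (ratr q) <= 1.
Proof.
move=> lt; rewrite /ratr fM.
have dpos := denq_gt0 q.
have hd : (denq q)%:~R = (`|denq q|%N)%:R :> algC.
  by rewrite -[in LHS](gez0_abs (ltW dpos)) pmulrn.
have nd : ~~ (p %| `|denq q|)%N.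
  apply/negP => /dvdn_leq; rewrite absz_gt0 gt_eqF //= => /(_ isT).
  by rewrite leqNgt lt.
have dnz : (denq q)%:~R != 0 :> algC by rewrite intr_eq0 gt_eqF.
rewrite fV // hd f_coprime // invr1 mulr1; exact: f_int.
Qed.

End Abs.

Lemma alg_bound (R : realFieldType) (x : algC) : exists N : nat,
  forall p, prime p -> (N < p)%N -> forall f : algC -> R, padic_absval p f ->
  f x <= 1.
Proof.
have [P [DP monP] _] := minCpolyP x.
exists (\max_(i < size P) `|denq P`_i|%N) => p pr lt f hf.
have hc : forall i, f (ratr P`_i) <= 1.
  move=> i; case: (ltnP i (size P)) => hi.
    apply: (f_rat hf pr); apply: leq_ltn_trans lt.
    exact: (leq_bigmax_cond (Ordinal hi)).
  by rewrite nth_default // rmorph0 (f0 hf) ler01.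
set Q := map_poly ratr P in DP.
have rt : root Q x by rewrite -DP root_minCpoly.
have sQ : size Q = size P by rewrite size_map_poly.
have s1 : (1 < size Q)%N by rewrite -DP size_minCpoly.
have lQ : lead_coef Q = 1 by rewrite -DP; apply/monicP/minCpoly_monic.
rewrite leNgt; apply/negP => gt.
move: rt; rewrite /root horner_coef.
have -> : size Q = (size Q).-1.+1 by rewrite prednK // ltnW.
rewrite big_ord_recr /= -/(lead_coef Q) lQ mul1r => /eqP e.
set n := (size Q).-1 in e.
set S := (\sum_(_ < _) _) in e.
have en : x ^+ n = - S by rewrite -[LHS](addKr S) e addr0.
have n1 : (1 <= n)%N by rewrite /n -ltnS prednK // ltnW.
have fx0 : 0 <= f x by lra.
have hb : f (x ^+ n) <= f x ^+ n.-1.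
  rewrite en (fN hf); apply: (f_sum hf); first exact: exprn_ge0.
  move=> i _; rewrite (fM hf) (fX hf).
  have hq : f Q`_i <= 1 by rewrite /Q coef_map hc.
  apply: le_trans (_ : f x ^+ i <= _).
    rewrite -[X in _ <= X]mul1r; apply: ler_wpM2r => //; exact: exprn_ge0.
  by rewrite ler_eXn2l // -ltnS prednK.
rewrite (fX hf) -(prednK n1) exprS prednK // in hb.
have : 0 < f x ^+ n.-1 by apply: exprn_gt0; lra.
move=> hpos; clear -hb hpos gt; nra.
Qed.

Lemma seq_bound (R : realFieldType) (s : seq algC) : exists N : nat,
  forall p, prime p -> (N < p)%N -> forall f : algC -> R, padic_absval p f ->
  forall c, c \in s -> f c <= 1.
Proof.
elim: s => [|a s [N HN]]; first by exists 0%N.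
have [M HM] := alg_bound R a.
exists (maxn N M) => p pr lt f hf c; rewrite inE => /orP[/eqP ->|cs].
  by apply: HM pr _ f hf; apply: leq_ltn_trans lt; apply: leq_maxr.
by apply: HN pr _ f hf c cs; apply: leq_ltn_trans lt; apply: leq_maxl.
Qed.

Lemma horner_bound (R : realFieldType) p (f : algC -> R) (hf : padic_absval p f)
  (P : {poly algC}) (l : algC) :
  (forall c, c \in (P : seq algC) -> f c <= 1) -> f l <= 1 -> f P.[l] <= 1.
Proof.
move=> hc hl; rewrite horner_coef; apply: (f_sum hf); first exact: ler01.
move=> i _; rewrite (fM hf) (fX hf).
have h1 : f P`_i <= 1 by apply: hc; apply: mem_nth.
have h2 : f l ^+ i <= 1 := exprn_ile1 i (f_ge0 hf l) hl.
have := f_ge0 hf P`_i; have := exprn_ge0 i (f_ge0 hf l); nra.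
Qed.

Lemma step_good (R : realFieldType) p (f : algC -> R) (hf : padic_absval p f)
  (d : nat) (l a b : algC) : (1 <= d)%N -> f l = 1 ->
  Num.max (f a) (f b) = 1 ->
  Num.max (f (a ^+ d + l * b ^+ d)) (f (a * b ^+ (d - 1))) = 1.
Proof.
move=> d1 fl /max1P[ha hb hab].
have fa0 := f_ge0 hf a; have fb0 := f_ge0 hf b.
have hbd : f b ^+ (d - 1) <= 1 by apply: exprn_ile1.
have hbd' : f b ^+ d <= 1 by apply: exprn_ile1.
have had : f a ^+ d <= 1 by apply: exprn_ile1.
have hbd0 := exprn_ge0 (d - 1) fb0.
have hB : f (a * b ^+ (d - 1)) <= 1 by rewrite (fM hf) (fX hf); nra.
have hA : f (a ^+ d + l * b ^+ d) <= 1.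
  apply: le_trans (fD hf _ _) _; rewrite (fM hf) !(fX hf) fl mul1r.
  by rewrite ge_max had hbd'.
apply: max1E => //.
have [ea|lta] := eqVneq (f a) 1.
  have [eb|ltb] := eqVneq (f b) 1.
    by right; rewrite (fM hf) (fX hf) ea eb expr1n mulr1.
  have fbl : f b < 1 by rewrite lt_neqAle ltb.
  have hbl : f b ^+ d < 1.
    rewrite -(prednK d1) exprS.
    have := exprn_ile1 d.-1 fb0 hb; have := exprn_ge0 d.-1 fb0; nra.
  left; rewrite addrC (f_strict hf).
    by rewrite (fX hf) ea expr1n.
  by rewrite (fM hf) !(fX hf) fl ea expr1n mul1r.
have eb : f b = 1 by case: hab => // e; rewrite e eqxx in lta.
have fal : f a < 1 by rewrite lt_neqAle lta.
have hal : f a ^+ d < 1.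
  rewrite -(prednK d1) exprS.
  have := exprn_ile1 d.-1 fa0 ha; have := exprn_ge0 d.-1 fa0; nra.
left; rewrite (f_strict hf).
  by rewrite (fM hf) (fX hf) fl eb !expr1n mul1r.
by rewrite (fM hf) !(fX hf) fl eb !expr1n mul1r.
Qed.

Lemma divX_horner (P : {poly algC}) (l : algC) : P.[0] = 0 -> l != 0 ->
  (P %/ 'X).[l] = P.[l] / l.
Proof.
move=> P0 nl.
have hd : 'X %| P by have := dvdp_XsubCl P 0; rewrite polyC0 subr0 => ->; apply/eqP.
have := congr1 (fun q => q.[l]) (divpK hd); rewrite /= hornerM hornerX => <-.
by rewrite mulfK.
Qed.

Theorem proposition4p1 (R : realFieldType) (d : nat) (A B : {poly algC})
    (lam : algC) :
  (2 <= d)%N -> A != 0 -> B != 0 -> coprimep A B -> lam != 0 ->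
  forall absv : nat -> algC -> R,
    (forall p, prime p -> padic_absval p (absv p)) ->
    exists N : nat, forall p : nat, prime p -> (N < p)%N ->
      forall n : nat,
        Num.max (absv p (ABn d A B n).1.[lam]) (absv p (ABn d A B n).2.[lam]) = 1.
Proof.
move=> d2 nA nB cop nl absv habs.
have [u hu] := Bezout_eq1_coprimepP _ _ cop.
have [N HN] := seq_bound R
  [:: lam, lam^-1 & (A : seq algC) ++ (B : seq algC) ++ (u.1 : seq algC) ++ (u.2 : seq algC)].
exists N => p pr lt n.
have hf := habs p pr; set f := absv p in hf *.
have Hc := HN p pr lt f hf.
have fl1 : f lam <= 1 by apply: Hc; rewrite inE eqxx.
have fli : f lam^-1 <= 1 by apply: Hc; rewrite !inE eqxx orbT.
have fl : f lam = 1.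
  rewrite (fV hf nl) in fli.
  have := f_neq0 hf nl; have := f_ge0 hf lam => g nz.
  have hpos : 0 < f lam by rewrite lt_neqAle eq_sym nz g.
  apply/le_anti; rewrite fl1 /=; rewrite invf_le1 // in fli.
have hP : forall P : {poly algC}, (forall c, c \in (P : seq algC) -> c \in
    [:: lam, lam^-1 & (A : seq algC) ++ (B : seq algC) ++ (u.1 : seq algC) ++ (u.2 : seq algC)]) ->
    f P.[lam] <= 1.
  move=> P sub; apply: (horner_bound hf) => // c cP; exact/Hc/sub.
have hA : f A.[lam] <= 1 by apply: hP => c h; rewrite !inE ?mem_cat h ?orbT.
have hB : f B.[lam] <= 1 by apply: hP => c h; rewrite !inE ?mem_cat h ?orbT.
have hU : f u.1.[lam] <= 1 by apply: hP => c h; rewrite !inE ?mem_cat h ?orbT.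
have hV : f u.2.[lam] <= 1 by apply: hP => c h; rewrite !inE ?mem_cat h ?orbT.
have base : Num.max (f A.[lam]) (f B.[lam]) = 1.
  apply/le_anti; rewrite ge_max hA hB /=.
  have := congr1 (fun q => q.[lam]) hu; rewrite /= hornerD !hornerM hornerC => e.
  have h := fD hf (u.1.[lam] * A.[lam]) (u.2.[lam] * B.[lam]).
  rewrite e (f1 hf) !(fM hf) in h.
  have := f_ge0 hf A.[lam]; have := f_ge0 hf B.[lam].
  have := f_ge0 hf u.1.[lam]; have := f_ge0 hf u.2.[lam].
  move: h; case: (leP (f u.1.[lam] * f A.[lam]) (f u.2.[lam] * f B.[lam])) => h1 h;
  case: (leP (f A.[lam]) (f B.[lam])) => h2 *; nra.
have d1 : (1 <= d)%N by apply: leq_trans d2.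
case: n => [//|m] /=.
have first : Num.max (f (ABfirst d A B).1.[lam]) (f (ABfirst d A B).2.[lam]) = 1.
  rewrite /ABfirst; case: ifP => h0.
    by rewrite /ABstep /= !hornerE; exact: (step_good hf d1 fl base).
  move/negbFE/eqP: h0 => h0 /=.
  have hl0 : forall q : algC, f (q / lam) = f q.
    by move=> q; rewrite (fM hf) (fV hf nl) fl invr1 mulr1.
  rewrite !divX_horner //; last first.
    by rewrite !hornerE h0 expr0n (gtn_eqF d1).
    by rewrite !hornerE h0 mul0r.
  rewrite !hl0 !hornerE; exact: (step_good hf d1 fl base).
elim: m => [|m IH]; first exact: first.
rewrite iterS.
by rewrite /ABstep /= !hornerE; exact: (step_good hf d1 fl IH).
Qed.
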